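(* Let $\Sigma$ be an alphabet with $|\Sigma|\ge 3$ and $f\colon\Sigma^*\to\Sigma^*$ RCP. If there are letters $a,b\in\Sigma$ with $a\neq b$ and $f(a)\in b\Sigma^*$, then $f(x)\in b\Sigma^*$ for all $x\in\Sigma^*$.
   Context: $\Sigma^*$ is the free monoid over $\Sigma$ (finite words, concatenation, empty word $\varepsilon$). For a word $w$, $w\Sigma^*$ denotes the set of words having $w$ as a prefix. A function $f\colon(\Sigma^* )^k\to\Sigma^*$ is RCP if for every monoid morphism $\varphi\colon\Sigma^*\to\Sigma^*$ and all $u_1,\ldots,u_k,v_1,\ldots,v_k$ with $\varphi(u_i)=\varphi(v_i)$ for all $i$, we have $\varphi(f(u_1,\ldots,u_k))=\varphi(f(v_1,\ldots,v_k))$. *)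

(* Defs.v *)
From mathcomp Require Import all_boot.
Set Implicit Arguments. Unset Strict Implicit. Unset Printing Implicit Defensive.

Definition monoid_morph (S : Type) (phi : seq S -> seq S) : Prop :=
  phi [::] = [::] /\ forall u v : seq S, phi (u ++ v) = phi u ++ phi v.

(* RCP for unary functions (k = 1). *)
Definition RCP1 (S : Type) (f : seq S -> seq S) : Prop :=
  forall phi : seq S -> seq S, monoid_morph phi ->
    forall u v : seq S, phi u = phi v -> phi (f u) = phi (f v).

Definition starts_with (S : Type) (b : S) (w : seq S) : Prop :=
  exists t : seq S, w = b :: t.

(* Main.v *)
Require Import Defs.
From mathcomp Require Import all_boot.

Definition phiOf {S : Type} (h : S -> seq S) (w : seq S) := flatten (map h w).

Lemma phiOf_morph {S : Type} (h : S -> seq S) : monoid_morph (phiOf h).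
Proof. split; first by []. by move=> u v; rewrite /phiOf map_cat flatten_cat. Qed.

Lemma genL (S : eqType) (f : seq S -> seq S) (h : S -> seq S) (g b : S) x y :
  (forall z, z != g -> h z = [:: z]) -> b != g -> RCP1 f ->
  phiOf h x = phiOf h y -> starts_with b (f y) -> head b (f x) != g ->
  starts_with b (f x).
Proof.
move=> hz bg rcp exy [t ft] hx.
have := rcp _ (@phiOf_morph _ h) _ _ exy.
rewrite ft /phiOf /= (hz _ bg) /=.
move: hx; case: (f x) => [|e r] //= eg.
rewrite (hz _ eg) /= => -[-> _]; by exists r.
Qed.

Lemma third (S : finType) (e b : S) : 3 <= #|S| -> exists g : S, g != e /\ g != b.
Proof.
move=> H.
case: (boolP [exists g, (g != e) && (g != b)]).
  by move/existsP=> [g /andP [? ?]]; exists g.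
rewrite negb_exists => /forallP Hall.
have : #|S| <= #|[:: e; b]|.
  apply: subset_leq_card; apply/subsetP => z _.
  move: (Hall z); rewrite negb_and !negbK !inE => /orP [->|->] //; by rewrite orbT.
move=> H2; have := leq_trans H (leq_trans H2 (card_size _)); by [].
Qed.

Lemma substL (S : eqType) (g : S) (x w : seq S) : g \notin w ->
  w = flatten (map (fun z => if z == g then x else [:: z]) w).
Proof.
elim: w => [|z w IHw] //=.
rewrite inE negb_or => /andP [zg wg].
by rewrite eq_sym (negbTE zg) /= -IHw.
Qed.

Theorem mainTheorem8 (S : finType) (f : seq S -> seq S) :
  3 <= #|S| -> RCP1 f ->
  forall a b : S, a <> b -> starts_with b (f [:: a]) ->
  forall x : seq S, starts_with b (f x).
Proof.
move=> H3 rcp a b ab fa.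
have letter : forall d, d != b -> starts_with b (f [:: d]).
  move=> d db.
  case: (eqVneq d a) => [->|da] //.
  pose h := fun z : S => if z == a then [:: d] else [:: z].
  have := rcp _ (@phiOf_morph _ h) [:: d] [:: a].
  rewrite /phiOf /= /h eqxx (negbTE da) => /(_ erefl).
  case: fa => t ->; rewrite /= (_ : (b == a) = false); last first.
    by apply/eqP => E; apply: ab.
  case: (f [:: d]) => [|e r] //=.
  case: (eqVneq e a) => [_ [E _]|_ [-> _]]; last by exists r.
  by rewrite E eqxx in db.
move=> x; move: {2}(size x) (leqnn (size x)) => n; elim: n x => [|n IH] x Hx.
all: have [g [ge gb]] := @third S (head b (f x)) b H3.
all: have bg : b != g by rewrite eq_sym.
all: case: (boolP (g \in x)) => gx.
- by move: Hx gx; rewrite leqn0 => /nilP ->.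
- pose h := fun z : S => if z == g then x else [:: z].
  apply: (@genL S f h g b x [:: g]) => //.
  + by move=> z zg; rewrite /h (negbTE zg).
  + rewrite /phiOf /= /h eqxx cats0; symmetry; apply: substL; exact: gx.
  + by apply: letter.
  + by rewrite eq_sym.
- pose h := fun z : S => if z == g then [::] else [:: z].
  have phF : forall w, phiOf h w = [seq z <- w | z != g].
    by elim => [|z w IHw] //=; rewrite /phiOf /= /h; case: (z == g) => //=; rewrite -IHw.
  apply: (@genL S f h g b x [seq z <- x | z != g]) => //.
  + by move=> z zg; rewrite /h (negbTE zg).
  + by rewrite !phF filter_id.
  + apply: IH.
    have : size [seq z <- x | z != g] < size x.
      rewrite size_filter -[X in _ < X](count_predC (fun z => z != g)).
      rewrite -[X in X < _]addn0 ltn_add2l -has_count.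
      by apply/hasP; exists g => //=; rewrite negbK.
    move=> Hs; by rewrite -ltnS (leq_trans Hs Hx).
  + by rewrite eq_sym.
- pose h := fun z : S => if z == g then x else [:: z].
  apply: (@genL S f h g b x [:: g]) => //.
  + by move=> z zg; rewrite /h (negbTE zg).
  + rewrite /phiOf /= /h eqxx cats0; symmetry; apply: substL; exact: gx.
  + by apply: letter.
  + by rewrite eq_sym.
Qed.
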